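(* Suppose that $\mathfrak{F}$ is a 2-recognizable formation and let $G$ be a finite group. If $\mathcal{I}_\mathfrak{F}(G)$ is a subgroup of $G$ and $G=\mathcal{I}_\mathfrak{F}(G)\langle g\rangle$ for some $g\in G$, then $G\in\mathfrak{F}$.
   Context: A formation is a class of finite groups closed under homomorphic images and subdirect products. $\mathfrak{F}$ is 2-recognizable if a finite group belongs to $\mathfrak{F}$ whenever all its 2-generated subgroups belong to $\mathfrak{F}$. $\mathcal{I}_\mathfrak{F}(G)$ is the set of $x\in G$ such that $\langle x,y\rangle\in\mathfrak{F}$ for all $y\in G$. *)

(* Defs.v *)
From mathcomp Require Import all_boot all_fingroup.
Set Implicit Arguments. Unset Strict Implicit. Unset Printing Implicit Defensive.
Local Open Scope group_scope.

Definition group_class := forall gT : finGroupType, {group gT} -> Prop.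

(* Formation: closed under homomorphic images (hence isomorphisms) and
   subdirect products (G/N1, G/N2 in F with N1 :&: N2 = 1 implies G in F). *)
Definition formation (F : group_class) : Prop :=
  (forall (gT rT : finGroupType) (G : {group gT}) (f : {morphism G >-> rT}),
      F gT G -> F rT (f @* G)%G) /\
  (forall (gT : finGroupType) (G N1 N2 : {group gT}),
      N1 <| G -> N2 <| G -> N1 :&: N2 = 1 ->
      F _ (G / N1)%G -> F _ (G / N2)%G -> F gT G).

Definition two_recognizable (F : group_class) : Prop :=
  forall (gT : finGroupType) (G : {group gT}),
    (forall x y, x \in G -> y \in G -> F gT <<[set x; y]>>%G) -> F gT G.

Definition in_IF (F : group_class) (gT : finGroupType) (G : {group gT}) (x : gT) : Prop :=
  x \in G /\ forall y, y \in G -> F gT <<[set x; y]>>%G.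

(* Main.v *)
Require Import Defs.
From mathcomp Require Import all_boot all_fingroup.
Local Open Scope group_scope.

Lemma F_eq (F : group_class) (gT : finGroupType) (H K : {group gT}) :
  H :=: K -> F gT H -> F gT K.
Proof. by move=> e; have -> : H = K by apply: val_inj. Qed.

Theorem lemma4p1 (F : group_class) (hF : formation F) (h2 : two_recognizable F)
  (gT : finGroupType) (G : {group gT}) (I : {group gT})
  (hI : forall x, x \in I <-> in_IF F G x)
  (g : gT) (hg : g \in G) (hG : G :=: I * <[g]>) :
  F gT G.
Proof.
have sIG : I \subset G by apply/subsetP => x /hI [].
have nIG : G \subset 'N(I).
  apply/subsetP => c Gc; rewrite inE; apply/subsetP => z.
  rewrite mem_conjg => /hI [Ga Fa].
  have Gz : z \in G by have := groupJ Ga Gc; rewrite -conjgM mulVg conjg1.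
  apply/hI; split => // y Gy.
  have Gy' : y ^ c^-1 \in G by rewrite groupJ ?groupV.
  have := (proj1 hF) _ _ _ (conjgm_morphism <<[set z ^ c^-1; y ^ c^-1]>>%G c)
             (Fa _ Gy').
  apply: F_eq => /=.
  rewrite morphim_conj setIid -genJ conjUg !conjg_set1 -!conjgM mulVg !conjg1.
  done.
have nIg : g \in 'N(I) by apply: (subsetP nIG).
have cosx : forall x, x \in G -> exists i, coset I x = coset I g ^+ i.
  move=> x; rewrite hG => /mulsgP [a b Ia /cycleP [i ->] ->].
  have Na : a \in 'N(I) by apply: (subsetP nIG); apply: (subsetP sIG).
  exists i; rewrite morphM ?groupX //= (coset_id Ia) mul1g morphX //.
have Fin : forall x y, x \in I -> y \in G -> F gT <<[set x; y]>>%G.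
  by move=> x y /hI [_ H] Gy; apply: H.
have claim : forall n i j x y, i + j <= n -> x \in G -> y \in G ->
    coset I x = coset I g ^+ i -> coset I y = coset I g ^+ j ->
    F gT <<[set x; y]>>%G.
  elim=> [|n IH] i j x y hn Gx Gy cx cy.
  - have i0 : i = 0 by move: hn; case: (i).
    apply: Fin => //; apply: coset_idr; first exact: (subsetP nIG).
    by rewrite cx i0.
  - case: (posnP i) => [i0|ip].
      apply: Fin => //; apply: coset_idr; first exact: (subsetP nIG).
      by rewrite cx i0.
    case: (posnP j) => [j0|jp].
      rewrite setUC; apply: Fin => //; apply: coset_idr; first exact: (subsetP nIG).
      by rewrite cy j0.
    case: (leqP i j) => hij.
    + have Gyx : y * x^-1 \in G by rewrite groupM ?groupV.
      have hn' : i + (j - i) <= n.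
        rewrite subnKC //; rewrite -ltnS; apply: leq_trans hn.
        by rewrite -addn1 addnC leq_add2r.
      have cy' : coset I (y * x^-1) = coset I g ^+ (j - i).
        rewrite morphM ?morphV ?groupV ?(subsetP nIG) //= cx cy.
        by rewrite expgnFr.
      have := IH i (j - i) x (y * x^-1) hn' Gx Gyx cx cy'.
      apply: F_eq.
        apply/eqP; rewrite eqEsubset !gen_subG !subUset !sub1set.
        rewrite ![x \in _]mem_gen ?set21 //=; apply/andP; split.
          by rewrite groupM ?groupV ?mem_gen ?set21 ?set22.
        by rewrite -{1}(mulgKV x y) groupM ?mem_gen ?set21 ?set22.
    + have Gxy : x * y^-1 \in G by rewrite groupM ?groupV.
      have hji : j <= i by apply: ltnW.
      have hn' : (i - j) + j <= n.
        rewrite subnK //; rewrite -ltnS; apply: leq_trans hn.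
        by rewrite -addn1 leq_add2l.
      have cx' : coset I (x * y^-1) = coset I g ^+ (i - j).
        rewrite morphM ?morphV ?groupV ?(subsetP nIG) //= cx cy.
        by rewrite expgnFr.
      have := IH (i - j) j (x * y^-1) y hn' Gxy Gy cx' cy.
      apply: F_eq.
        apply/eqP; rewrite eqEsubset !gen_subG !subUset !sub1set.
        rewrite ![y \in _]mem_gen ?set22 ?andbT //=; apply/andP; split.
          by rewrite groupM ?groupV ?mem_gen ?set21 ?set22.
        by rewrite -{1}(mulgKV y x) groupM ?mem_gen ?set21 ?set22.
apply: h2 => x y Gx Gy.
have [i ci] := cosx x Gx; have [j cj] := cosx y Gy.
exact: (claim (i + j) i j x y (leqnn _) Gx Gy ci cj).
Qed.
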